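(* Let $a,b,q$ be complex numbers with $q\ne0$, and define $B_{n,k}(a,b)$ ($n\ge k\ge0$) by $$z^k=\sum_{n=k}^\infty B_{n,k}(a,b)\,z^n\frac{(az;q)_n}{(bz;q)_n}\qquad(k\ge0)$$ in $\mathbb{C}[[z]]$. Then for every integer $n\ge1$, as rational functions of $y$, $$\sum_{k=0}^nB_{n,k}(a,b)y^k=\frac{(b/y;q)_{n-1}}{(a/y;q)_n}y^{n}-a\sum_{k=0}^{n-1}B_{n-k,1}(a,b)\,q^{(n-k)k}\frac{(b/y;q)_k}{(a/y;q)_{k+1}}y^k.$$
   Context: $(x;q)_n=\prod_{j=0}^{n-1}(1-xq^j)$ for $n\ge0$, $(x;q)_0=1$. The family $\{z^n(az;q)_n/(bz;q)_n\}_{n\ge0}$ is a basis of $\mathbb{C}[[z]]$ in the formal sense, so the $B_{n,k}(a,b)$ are uniquely determined. *)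

(* Defs.v *)
From HB Require Import structures.
From mathcomp Require Import all_boot all_order all_algebra.
From mathcomp Require Import complex.
From mathcomp Require Import reals.
Set Implicit Arguments. Unset Strict Implicit. Unset Printing Implicit Defensive.
Import Order.TTheory GRing.Theory Num.Theory.
Local Open Scope ring_scope.

Definition qpoch {F : comRingType} (x q : F) (n : nat) : F :=
  \prod_(j < n) (1 - x * q ^+ j).

(* (c z; q)_n as a polynomial in z *)
Definition qpochP {F : comRingType} (c q : F) (n : nat) : {poly F} :=
  \prod_(j < n) (1 - (c * q ^+ j)%:P * 'X).

(* s is the coefficient sequence of the formal power series
   z^n (a z;q)_n / (b z;q)_n, characterized by
   s * (b z;q)_n = z^n (a z;q)_n in F[[z]] (the denominator has constant term 1,
   so s is uniquely determined). *)
Definition is_basis_series {F : comRingType} (a b q : F) (n : nat) (s : nat -> F) :=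
  forall m : nat,
    \sum_(i < m.+1) s i * (qpochP b q n)`_(m - i) = ('X^n * qpochP a q n)`_m.

(* Main.v *)
Require Import Defs.
From HB Require Import structures.
From mathcomp Require Import all_boot all_order all_algebra.
From mathcomp Require Import complex.
From mathcomp Require Import reals.
Import Order.TTheory GRing.Theory Num.Theory.
From mathcomp Require Import ring.
Set Implicit Arguments. Unset Strict Implicit.
Local Open Scope ring_scope.


Definition cg {F : fieldType} (N : nat) (p r : {poly F}) := 'X^N %| p - r.

Lemma cg_coef (F : fieldType) N (p r : {poly F}) :
  cg N p r <-> (forall i, (i < N)%N -> p`_i = r`_i).
Proof.
split.
  move=> /divpK H i iN; apply/eqP; rewrite -subr_eq0 -coefB -H coefMXn iN //.
move=> H; rewrite /cg -(poly_take_drop N (p - r)).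
have -> : take_poly N (p - r) = 0.
  apply/polyP => i; rewrite coef_take_poly coef0 coefB.
  by case: ifP => // /H ->; rewrite subrr.
by rewrite add0r dvdp_mull.
Qed.

Lemma cg_refl (F : fieldType) N (p : {poly F}) : cg N p p.
Proof. by rewrite /cg subrr dvdp0. Qed.

Lemma cg_eq (F : fieldType) N (p r : {poly F}) : p = r -> cg N p r.
Proof. by move=> ->; apply: cg_refl. Qed.

Lemma cg_sym (F : fieldType) N (p r : {poly F}) : cg N p r -> cg N r p.
Proof. by rewrite /cg -opprB dvdpNr. Qed.

Lemma cg_trans (F : fieldType) N (p r t : {poly F}) : cg N p r -> cg N r t -> cg N p t.
Proof.
move=> H1 H2; rewrite /cg (_ : p - t = (p - r) + (r - t)); last by ring.
exact: dvdp_add.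
Qed.

Lemma cgD (F : fieldType) N (p r p' r' : {poly F}) :
  cg N p r -> cg N p' r' -> cg N (p + p') (r + r').
Proof.
move=> H1 H2; rewrite /cg (_ : p + p' - (r + r') = (p - r) + (p' - r')); last by ring.
exact: dvdp_add.
Qed.

Lemma cgN (F : fieldType) N (p r : {poly F}) : cg N p r -> cg N (- p) (- r).
Proof. by rewrite /cg -opprD dvdpNr. Qed.

Lemma cgB (F : fieldType) N (p r p' r' : {poly F}) :
  cg N p r -> cg N p' r' -> cg N (p - p') (r - r').
Proof. by move=> H1 H2; apply: cgD => //; apply: cgN. Qed.

Lemma cgM (F : fieldType) N (p r p' r' : {poly F}) :
  cg N p r -> cg N p' r' -> cg N (p * p') (r * r').
Proof.
move=> H1 H2; rewrite /cg (_ : p * p' - r * r' = (p - r) * p' + r * (p' - r')); last by ring.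
by apply: dvdp_add; [apply: dvdp_mulr | apply: dvdp_mull].
Qed.

Lemma cgMl (F : fieldType) N (t p r : {poly F}) : cg N p r -> cg N (t * p) (t * r).
Proof. by apply: cgM; apply: cg_refl. Qed.

Lemma cgZ (F : fieldType) N (c : F) (p r : {poly F}) : cg N p r -> cg N (c *: p) (c *: r).
Proof. by rewrite -!mul_polyC; apply: cgMl. Qed.

Lemma cg_sum (F : fieldType) N (I : Type) (rr : seq I) (P : pred I) (f g : I -> {poly F}) :
  (forall i, P i -> cg N (f i) (g i)) -> cg N (\sum_(i <- rr | P i) f i) (\sum_(i <- rr | P i) g i).
Proof.
move=> H; apply: (big_ind2 (cg N)) => //; first exact: cg_refl.
by move=> *; apply: cgD.
Qed.

Lemma cg_le (F : fieldType) N N' (p r : {poly F}) : (N' <= N)%N -> cg N p r -> cg N' p r.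
Proof. by move=> le; apply: dvdp_trans; apply: dvdp_exp2l. Qed.

Lemma cg_cancel (F : fieldType) N (P p r : {poly F}) : P`_0 != 0 ->
  cg N (p * P) (r * P) -> cg N p r.
Proof.
move=> H0; rewrite /cg -mulrBl Gauss_dvdpl //.
apply: coprimep_expl; rewrite coprimep_sym coprimepX /root horner_coef0 //.
Qed.

Lemma cg_mulXk (F : fieldType) k N' N (t p r : {poly F}) : (k + N' = N)%N ->
  'X^k %| t -> cg N' p r -> cg N (t * p) (t * r).
Proof.
move=> <- Ht H; rewrite /cg -mulrBr exprD; exact: dvdp_mul.
Qed.

Lemma cg_comp (F : fieldType) N (c : F) (p r : {poly F}) :
  cg N p r -> cg N (p \Po (c%:P * 'X)) (r \Po (c%:P * 'X)).
Proof.
move=> /divpK H; rewrite /cg -comp_polyB -H comp_polyM comp_Xn_poly exprMn.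
by rewrite mulrA dvdp_mull.
Qed.


Lemma qpochP_rec (F : fieldType) (c q : F) j :
  qpochP c q j.+1 = qpochP c q j * (1 - (c * q ^+ j)%:P * 'X).
Proof. by rewrite /qpochP big_ord_recr. Qed.

Lemma qpochP0 (F : fieldType) (c q : F) j : (qpochP c q j)`_0 = 1.
Proof.
elim: j => [|j IH]; first by rewrite /qpochP big_ord0 coef1.
by rewrite qpochP_rec -horner_coef0 hornerM horner_coef0 IH !hornerE; ring.
Qed.

Lemma qpochP_add (F : fieldType) (c q : F) k m :
  qpochP c q (k + m) = qpochP c q k * qpochP (c * q ^+ k) q m.
Proof.
elim: m => [|m IH]; first by rewrite addn0 /qpochP big_ord0 mulr1.
by rewrite addnS !qpochP_rec IH -mulrA -mulrA exprD mulrA.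
Qed.

Lemma qpochP_comp (F : fieldType) (c q : F) k m :
  qpochP c q m \Po ((q ^+ k)%:P * 'X) = qpochP (c * q ^+ k) q m.
Proof.
elim: m => [|m IH]; first by rewrite /qpochP !big_ord0 comp_polyC.
rewrite !qpochP_rec comp_polyM IH comp_polyB comp_polyC comp_polyM comp_polyC comp_polyX.
by rewrite mulrA -polyCM mulrAC.
Qed.

Lemma s_low (F : fieldType) (a b q : F) j (s : nat -> F) :
  is_basis_series a b q j s -> (forall i, (i < j)%N -> s i = 0) /\ s j = 1.
Proof.
move=> H.
have Z : forall i, (i < j)%N -> s i = 0.
  elim/ltn_ind => i IH ij; have := H i.
  rewrite big_ord_recr /= big1 ?add0r; last first.
    by move=> l _; rewrite IH ?mul0r //; apply: ltn_trans ij.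
  by rewrite subnn qpochP0 mulr1 coefXnM ij.
split => //; have := H j.
rewrite big_ord_recr /= big1 ?add0r; last by move=> l _; rewrite Z ?mul0r.
by rewrite subnn qpochP0 mulr1 coefXnM ltnn subnn qpochP0.
Qed.


Definition Sp {F : fieldType} (s : nat -> nat -> F) (M j : nat) : {poly F} :=
  \poly_(i < M) s j i.

Lemma Sp_H1 (F : fieldType) (a b q : F) s M j :
  is_basis_series a b q j (s j) ->
  cg M (Sp s M j * qpochP b q j) ('X^j * qpochP a q j).
Proof.
move=> H; apply/cg_coef => i iM; rewrite -H coefM.
apply: eq_bigr => l _; rewrite coef_poly (leq_ltn_trans _ iM) //.
by rewrite -ltnS.
Qed.

Lemma Sp_coef (F : fieldType) (s : nat -> nat -> F) M j i :
  (i < M)%N -> (Sp s M j)`_i = s j i.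
Proof. by move=> iM; rewrite coef_poly iM. Qed.

Lemma Sp_X (F : fieldType) (a b q : F) s M j :
  is_basis_series a b q j (s j) -> 'X^j %| Sp s M j.
Proof.
move=> /s_low [Z _].
have : cg j (Sp s M j) 0.
  apply/cg_coef => i ij; rewrite coef0 coef_poly; case: ifP => // _; exact: Z.
by rewrite /cg subr0.
Qed.

Lemma Sp_step (F : fieldType) (a b q : F) s M k :
  (forall j, is_basis_series a b q j (s j)) ->
  cg M (Sp s M k.+1 * (1 - (b * q ^+ k)%:P * 'X))
       ('X * (1 - (a * q ^+ k)%:P * 'X) * Sp s M k).
Proof.
move=> Hs; apply: (@cg_cancel _ _ (qpochP b q k)); first by rewrite qpochP0 oner_eq0.
rewrite -mulrA [_ * qpochP b q k]mulrC -qpochP_rec.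
apply: cg_trans; first exact: Sp_H1.
apply: cg_sym.
rewrite (_ : 'X * (1 - (a * q ^+ k)%:P * 'X) * Sp s M k * qpochP b q k =
  ('X * (1 - (a * q ^+ k)%:P * 'X)) * (Sp s M k * qpochP b q k)); last by ring.
apply: cg_trans; first by apply: cgMl; apply: Sp_H1.
by apply: cg_eq; rewrite qpochP_rec exprS; ring.
Qed.

Lemma Sp_A (F : fieldType) (a b q : F) s M k m :
  (forall j, is_basis_series a b q j (s j)) ->
  cg M (Sp s M k * (Sp s M m \Po ((q ^+ k)%:P * 'X)))
       (q ^+ (m * k) *: Sp s M (k + m)).
Proof.
move=> Hs; apply: (@cg_cancel _ _ (qpochP b q (k + m))); first by rewrite qpochP0 oner_eq0.
rewrite qpochP_add -qpochP_comp.
have -> : Sp s M k * (Sp s M m \Po (q ^+ k)%:P * 'X) *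
   (qpochP b q k * (qpochP b q m \Po (q ^+ k)%:P * 'X)) =
   (Sp s M k * qpochP b q k) * ((Sp s M m * qpochP b q m) \Po (q ^+ k)%:P * 'X).
  by rewrite comp_polyM; ring.
apply: cg_trans; first by apply: cgM; [apply: Sp_H1 | apply: cg_comp; apply: Sp_H1].
rewrite qpochP_comp -qpochP_add -scalerAl; apply: cg_sym; apply: cg_trans.
  by apply: cgZ; apply: Sp_H1.
apply: cg_eq; rewrite comp_polyM comp_Xn_poly qpochP_comp qpochP_add exprMn exprD -mul_polyC mulnC exprM rmorphXn /=; ring.
Qed.

Lemma Sp_B (F : fieldType) (a b q : F) s (B : nat -> nat -> F) M k :
  (forall j, is_basis_series a b q j (s j)) ->
  (forall m, \sum_(1 <= n < m.+1) B n 1%N * s n m = (m == 1%N)%:R) ->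
  (k <= M)%N ->
  cg M (\sum_(1 <= m < M - k) B m 1%N *: (q ^+ (m * k) *: Sp s M (k + m)))
       ((q ^+ k)%:P * 'X * Sp s M k).
Proof.
move=> Hs HB kM.
set W := \sum_(1 <= m < M - k) B m 1%N *: Sp s M m.
have HW : cg (M - k) W 'X.
  apply/cg_coef => t tM; rewrite coef_sum coefX.
  have tM' : (t < M)%N by apply: leq_trans tM (leq_subr k M).
  rewrite (eq_bigr (fun m => B m 1%N * s m t)); last first.
    by move=> m _; rewrite coefZ Sp_coef.
  rewrite (@big_cat_nat _ _ _ t.+1) //= HB big_nat_cond big1 ?addr0 //.
  move=> i /andP [/andP [ti _] _]; have [Z _] := @s_low _ _ _ _ _ _ (Hs i).
  by rewrite Z ?mulr0.
have HC := cg_comp (q ^+ k) HW; rewrite comp_polyX in HC.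
have := cg_mulXk (subnKC kM) (@Sp_X _ _ _ _ _ M _ (Hs k)) HC => HM.
apply: (@cg_trans _ _ _ (Sp s M k * (W \Po ((q ^+ k)%:P * 'X)))); last first.
  by rewrite [_ * Sp s M k]mulrC.
apply: cg_sym; rewrite /W raddf_sum mulr_sumr; apply: cg_sum => m _.
rewrite -[X in cg _ (_ * X) _]/((B m 1%N *: Sp s M m) \Po ((q ^+ k)%:P * 'X)).
by rewrite comp_polyZ -scalerAr; apply: cgZ; apply: Sp_A.
Qed.


Lemma tri1 (V : zmodType) M (f : nat -> nat -> V) :
  \sum_(j < M) \sum_(k < j.+1) f j k = \sum_(k < M) \sum_(k <= j < M) f j k.
Proof.
elim: M => [|M IH]; first by rewrite !big_ord0.
rewrite big_ord_recr /= IH.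
rewrite [RHS](eq_bigr (fun k : 'I_M.+1 => \sum_(k <= j < M) f j k + f M k)); last first.
  by move=> k _; rewrite big_nat_recr //= -ltnS.
rewrite big_split /= [X in _ = X + _]big_ord_recr /= big_geq // addr0. by [].
Qed.

Lemma tri2 (V : zmodType) M (f : nat -> nat -> V) :
  \sum_(j < M) \sum_(k < j) f j k = \sum_(k < M) \sum_(k.+1 <= j < M) f j k.
Proof.
elim: M => [|M IH]; first by rewrite !big_ord0.
rewrite big_ord_recr /= IH.
rewrite [RHS]big_ord_recr /= big_geq // addr0.
rewrite [X in _ = X](eq_bigr (fun k : 'I_M => \sum_(k.+1 <= j < M) f j k + f M k)); last first.
  by move=> k _; rewrite big_nat_recr //=.
by rewrite big_split.
Qed.

Lemma uniq_coef (F : fieldType) (a b q : F) s M (d : nat -> F) :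
  (forall j, is_basis_series a b q j (s j)) ->
  (forall m, (m < M)%N -> \sum_(j < M) d j * s j m = 0) ->
  forall m, (m < M)%N -> d m = 0.
Proof.
move=> Hs H; elim/ltn_ind => m IH mM.
have := H m mM; rewrite (bigD1 (Ordinal mM)) //= big1 ?addr0.
  by have [_ ->] := @s_low _ _ _ _ _ _ (Hs m); rewrite mulr1.
move=> j /eqP jm; have [jlt|mlt] := ltnP j m.
  by rewrite IH ?mul0r.
have [Z _] := @s_low _ _ _ _ _ _ (Hs j).
rewrite Z ?mulr0 // ltn_neqAle mlt andbT; apply/eqP => E; apply: jm.
by apply: val_inj.
Qed.

Lemma geom_cg (F : fieldType) M (y : F) :
  cg M ((1 - y%:P * 'X) * \sum_(k < M) y ^+ k *: 'X^k) 1.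
Proof.
have -> : \sum_(k < M) y ^+ k *: 'X^k = \sum_(k < M) (y%:P * 'X) ^+ k.
  by apply: eq_bigr => k _; rewrite exprMn -mul_polyC rmorphXn.
have -> : (1 - y%:P * 'X) * \sum_(k < M) (y%:P * 'X) ^+ k = 1 - (y%:P * 'X) ^+ M.
  by rewrite -(opprB ((y%:P * 'X) ^+ M) 1) subrX1; ring.
rewrite /cg (_ : 1 - _ - 1 = - ((y ^+ M)%:P * 'X^M)); last by rewrite exprMn rmorphXn /=; ring.
by rewrite dvdpNr dvdp_mull.
Qed.

Lemma step_L (F : fieldType) (a b q : F) s (B : nat -> nat -> F) M (y : F) :
  (forall j, is_basis_series a b q j (s j)) ->
  (forall k m : nat, \sum_(k <= n < m.+1) B n k * s n m = (m == k)%:R) ->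
  cg M ((1 - y%:P * 'X) * \sum_(j < M) (\sum_(k < j.+1) B j k * y ^+ k) *: Sp s M j) 1.
Proof.
move=> Hs HB.
have E : \sum_(j < M) (\sum_(k < j.+1) B j k * y ^+ k) *: Sp s M j =
         \sum_(k < M) y ^+ k *: \sum_(k <= j < M) B j k *: Sp s M j.
  rewrite (eq_bigr (fun j : 'I_M => \sum_(k < j.+1) (B j k * y ^+ k) *: Sp s M j)); last first.
    by move=> j _; rewrite scaler_suml.
  rewrite (tri1 M (fun j k => (B j k * y ^+ k) *: Sp s M j)).
  apply: eq_bigr => k _; rewrite scaler_sumr; apply: eq_bigr => j _.
  by rewrite scalerA mulrC.
rewrite E; apply: cg_trans (geom_cg M y); apply: cgMl; apply: cg_sum => k _.
apply: cgZ; apply/cg_coef => t tM; rewrite coef_sum coefXn.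
rewrite (eq_bigr (fun j => B j k * s j t)); last first.
  by move=> j _; rewrite coefZ Sp_coef.
have [kt|tk] := leqP k t.
  have e1 : (k <= t.+1)%N := leqW kt.
  rewrite (@big_cat_nat _ _ _ t.+1 k M) //= (HB k t) big_nat_cond big1 ?addr0 //.
  move=> i /andP [/andP [ti _] _]; have [Z _] := @s_low _ _ _ _ _ _ (Hs i).
  by rewrite Z ?mulr0.
rewrite big_nat_cond big1 ?ltn_eqF //.
move=> i /andP [/andP [ki _] _]; have [Z _] := @s_low _ _ _ _ _ _ (Hs i).
by rewrite Z ?mulr0 // (leq_trans tk).
Qed.


Lemma per_k (F : fieldType) (a b q : F) s M k (y Q P1 e e1 : F) :
  (forall j, is_basis_series a b q j (s j)) ->
  P1 = Q * y -> e1 = Q * (y - b * q ^+ k) -> y * e = Q * (y - a * q ^+ k) ->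
  cg M ((1 - y%:P * 'X) * (P1 *: Sp s M k.+1 - a *: (Q *: ((q ^+ k)%:P * 'X * Sp s M k))))
       (y%:P * 'X * (e *: Sp s M k - e1 *: Sp s M k.+1)).
Proof.
move=> Hs HP1 He1 He.
have st := Sp_step M k Hs.
set S := Sp s M k; set S' := Sp s M k.+1; set bt := 1 - (b * q ^+ k)%:P * 'X.
set gm := 1 - (a * q ^+ k)%:P * 'X.
apply: (@cg_cancel _ _ bt).
  by rewrite /bt -horner_coef0 !hornerE subr0 oner_eq0.
apply: (@cg_trans _ _ _ ((1 - y%:P * 'X) * P1%:P * ('X * gm * S)
   - (1 - y%:P * 'X) * (a * Q)%:P * ((q ^+ k)%:P * 'X) * bt * S)).
  rewrite (_ : (1 - y%:P * 'X) * (P1 *: S' - a *: (Q *: ((q ^+ k)%:P * 'X * S))) * bt = (1 - y%:P * 'X) * P1%:P * (S' * bt)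
   - (1 - y%:P * 'X) * (a * Q)%:P * ((q ^+ k)%:P * 'X) * bt * S).
    by apply: cgB; [apply: cgMl | apply: cg_refl].
  by rewrite -!mul_polyC polyCM; ring.
apply: cg_sym.
apply: (@cg_trans _ _ _ (- (y%:P * 'X) * e1%:P * ('X * gm * S)
   + 'X * (y * e)%:P * bt * S)).
  rewrite (_ : y%:P * 'X * (e *: S - e1 *: S') * bt = - (y%:P * 'X) * e1%:P * (S' * bt)
   + 'X * (y * e)%:P * bt * S).
    by apply: cgD; [apply: cgMl | apply: cg_refl].
  by rewrite -!mul_polyC polyCM; ring.
apply: cg_eq; rewrite He HP1 He1 /gm /bt !polyCM !polyCB !polyCM; ring.
Qed.

Definition Cc (F : fieldType) (a b q y : F) (B : nat -> nat -> F) (j : nat) : F :=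
  qpoch (b / y) q j.-1 / qpoch (a / y) q j * y ^+ j
      - a * \sum_(k < j) B (j - k)%N 1%N * q ^+ ((j - k) * k)
              * qpoch (b / y) q k / qpoch (a / y) q k.+1 * y ^+ k.

Lemma qpoch_rec (F : fieldType) (c q : F) k :
  qpoch c q k.+1 = qpoch c q k * (1 - c * q ^+ k).
Proof. by rewrite /qpoch big_ord_recr. Qed.

Lemma qpoch_nz (F : fieldType) (c q : F) n k :
  qpoch c q n != 0 -> (k <= n)%N -> qpoch c q k != 0.
Proof.
move=> H; elim: n H => [|n IH] H; first by rewrite leqn0 => /eqP ->.
rewrite leq_eqVlt => /orP [/eqP -> //|]; rewrite ltnS; apply: IH.
by move: H; rewrite qpoch_rec mulf_eq0 negb_or => /andP [].
Qed.

Lemma tele (F : fieldType) (T : nat -> {poly F}) n :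
  \sum_(k < n) (T k - T k.+1) = T 0%N - T n.
Proof.
elim: n => [|n IH]; first by rewrite big_ord0 subrr.
by rewrite big_ord_recr /= IH addrA subrK.
Qed.


Lemma step_G (F : fieldType) (a b q : F) s (B : nat -> nat -> F) n (y : F) :
  (forall j, is_basis_series a b q j (s j)) ->
  (forall k m : nat, \sum_(k <= n < m.+1) B n k * s n m = (m == k)%:R) ->
  y != 0 -> qpoch (a / y) q n != 0 ->
  cg n.+1 ((1 - y%:P * 'X) * \sum_(j < n.+1) Cc a b q y B j *: Sp s n.+1 j) 1.
Proof.
move=> Hs HB y0 qan.
pose al k := qpoch (b / y) q k / qpoch (a / y) q k.+1 * y ^+ k.
pose P1 j := qpoch (b / y) q j.-1 / qpoch (a / y) q j * y ^+ j.
pose e k := qpoch (b / y) q k / qpoch (a / y) q k * y ^+ k.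
pose S := Sp s n.+1.
have E1 : \sum_(j < n.+1) Cc a b q y B j *: S j =
   \sum_(j < n.+1) P1 j *: S j - a *: \sum_(k < n) al k *:
       \sum_(1 <= m < n.+1 - k) B m 1%N *: (q ^+ (m * k) *: S (k + m)%N).
  rewrite /Cc; under eq_bigr do rewrite scalerBl; rewrite sumrB; congr (_ - _).
  under eq_bigr do rewrite -scalerA scaler_suml.
  rewrite -scaler_sumr; congr (_ *: _).
  rewrite (tri2 n.+1 (fun j k => (B (j - k)%N 1%N * q ^+ ((j - k) * k) * qpoch (b / y) q k
      / qpoch (a / y) q k.+1 * y ^+ k) *: S j)).
  rewrite big_ord_recr /= big_geq // addr0.
  apply: eq_bigr => k _; rewrite -[k.+1]add1n big_addn scaler_sumr.
  apply: eq_big_nat => m _; rewrite addnK !scalerA; congr (_ *: _); last by rewrite addnC.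
  by rewrite /al ?addn1 ?add1n; ring.
rewrite E1.
have E2 : cg n.+1 (\sum_(j < n.+1) P1 j *: S j - a *: \sum_(k < n) al k *:
       \sum_(1 <= m < n.+1 - k) B m 1%N *: (q ^+ (m * k) *: S (k + m)%N))
    (\sum_(j < n.+1) P1 j *: S j - a *: \sum_(k < n) al k *: ((q ^+ k)%:P * 'X * S k)).
  apply: cgB; first exact: cg_refl.
  apply: cgZ; apply: cg_sum => k _; apply: cgZ; apply: Sp_B => //.
  by apply: leq_trans (ltnW (ltn_ord k)) (leqnSn n).
apply: cg_trans (cgMl _ E2) _.
rewrite big_ord_recl /= scaler_sumr -addrA -sumrB mulrDr mulr_sumr.
rewrite (eq_bigr (fun i : 'I_n => (1 - y%:P * 'X) * (P1 i.+1 *: S i.+1 -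
         a *: (al i *: ((q ^+ i)%:P * 'X * S i))))); last by move=> i _; rewrite /bump leq0n.
apply: (@cg_trans _ _ _ ((1 - y%:P * 'X) * (P1 0%N *: S 0%N) +
   \sum_(i < n) y%:P * 'X * (e i *: S i - e i.+1 *: S i.+1))).
  apply: cgD; first exact: cg_refl.
  apply: cg_sum => k _.
  have kn : (k.+1 <= n)%N := ltn_ord k.
  have qa1 := qpoch_nz qan kn.
  have qa0 := qpoch_nz qan (ltnW kn).
  have qa1' := qa1; rewrite qpoch_rec mulf_eq0 negb_or in qa1'; case/andP: qa1' => _ fa.
  apply: per_k => //.
  - by rewrite /P1 /al /= exprSr mulrA.
  - rewrite /e /al qpoch_rec exprSr; field.
    by rewrite qa1 y0.
  - rewrite /e /al qpoch_rec; field.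
    have -> : y - a * q ^+ k = y * (1 - a / y * q ^+ k) by field.
    by rewrite qa0 y0 mulf_neq0.
rewrite -mulr_sumr (tele (fun k => e k *: S k)).
have P10 : P1 0%N = 1 by rewrite /P1 /qpoch /= !big_ord0 divr1 expr0 mulr1.
have e0 : e 0%N = 1 by rewrite /e /qpoch /= !big_ord0 divr1 expr0 mulr1.
rewrite P10 e0 !scale1r.
have S0 : cg n.+1 (S 0%N) 1.
  by have := Sp_H1 n.+1 (Hs 0%N); rewrite /qpochP !big_ord0 expr0 !mulr1.
have Xn : cg n.+1 (y%:P * 'X * (e n *: S n)) 0.
  rewrite /cg subr0 (_ : y%:P * 'X * (e n *: S n) = (y * e n)%:P * ('X * S n)); last first.
    by rewrite /e -mul_polyC !polyCM; ring.
  by apply: dvdp_mull; rewrite exprS; apply: dvdp_mul (dvdpp 'X) (Sp_X _ (Hs n)).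
rewrite (_ : (1 - y%:P * 'X) * S 0%N + y%:P * 'X * (S 0%N - e n *: S n) = S 0%N - y%:P * 'X * (e n *: S n)); last by ring.
by rewrite -(subr0 1); apply: cgB.
Qed.

Lemma main_gen (F : fieldType) (a b q : F) s (B : nat -> nat -> F) n (y : F) :
  (forall j, is_basis_series a b q j (s j)) ->
  (forall k m : nat, \sum_(k <= n < m.+1) B n k * s n m = (m == k)%:R) ->
  y != 0 -> qpoch (a / y) q n != 0 ->
  \sum_(k < n.+1) B n k * y ^+ k = Cc a b q y B n.
Proof.
move=> Hs HB y0 qan.
have HL := step_L n.+1 y Hs HB.
have HG := step_G Hs HB y0 qan.
have H : cg n.+1 (\sum_(j < n.+1) (\sum_(k < j.+1) B j k * y ^+ k) *: Sp s n.+1 j)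
                 (\sum_(j < n.+1) Cc a b q y B j *: Sp s n.+1 j).
  apply: (@cg_cancel _ _ (1 - y%:P * 'X)).
    by rewrite -horner_coef0 !hornerE subr0 oner_eq0.
  rewrite mulrC [X in cg _ _ X]mulrC; apply: cg_trans HL (cg_sym HG).
apply/eqP; rewrite -subr_eq0; apply/eqP.
apply: (@uniq_coef _ _ _ _ s n.+1 (fun j => \sum_(k < j.+1) B j k * y ^+ k - Cc a b q y B j) Hs _ n (ltnSn n)).
move=> m mM; have := (proj1 (cg_coef _ _ _) H) m mM.
rewrite !coef_sum => E.
under eq_bigr do rewrite mulrBl.
rewrite sumrB; apply/eqP; rewrite subr_eq0; apply/eqP.
by move: E; under eq_bigr do rewrite coefZ Sp_coef //; under [X in _ = X -> _]eq_bigr do rewrite coefZ Sp_coef //.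
Qed.


Unset Implicit Arguments.

Theorem corollary2p1 (R : realType) (a b q : R[i])
  (s : nat -> nat -> R[i]) (B : nat -> nat -> R[i]) :
  q != 0 ->
  (* s n = coefficients of z^n (az;q)_n/(bz;q)_n *)
  (forall n, is_basis_series a b q n (s n)) ->
  (* z^k = sum_{n>=k} B_{n,k} z^n (az;q)_n/(bz;q)_n, compared coefficientwise
     (coefficient of z^m; terms with n > m have no z^m coefficient) *)
  (forall k m : nat, \sum_(k <= n < m.+1) B n k * s n m = (m == k)%:R) ->
  forall (n : nat), (1 <= n)%N ->
  forall y : R[i], y != 0 -> qpoch (a / y) q n != 0 ->
    \sum_(k < n.+1) B n k * y ^+ k =
      qpoch (b / y) q n.-1 / qpoch (a / y) q n * y ^+ n
      - a * \sum_(k < n) B (n - k)%N 1%N * q ^+ ((n - k) * k)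
              * qpoch (b / y) q k / qpoch (a / y) q k.+1 * y ^+ k.
Proof.
move=> _ Hs HB n _ y y0 qan.
exact: (main_gen Hs HB y0 qan).
Qed.
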